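(* It is not possible in general to construct by origami a right triangle with given hypotenuse and leg. Precisely: $\sqrt{2+\sqrt2}\in\mathbb F_0$ and $1\in\mathbb F_0$, but $\sqrt{(\sqrt{2+\sqrt2})^2-1^2}=\sqrt{1+\sqrt2}\notin\mathbb F_0$. In particular $\mathbb F_0$ is not closed under $(h,a)\mapsto\sqrt{h^2-a^2}$ for $h>a>0$.
   Context: An origami pair is a pair $(\mathcal P,\mathcal L)$ where $\mathcal P\subset\mathbb R^2$ is a set of points and $\mathcal L$ is a collection of lines in $\mathbb R^2$ such that: (i) the intersection point of any two non-parallel lines of $\mathcal L$ lies in $\mathcal P$; (ii) for any two distinct points of $\mathcal P$, the line through them is in $\mathcal L$; (iii) for any two distinct points of $\mathcal P$, the perpendicular bisector of the segment joining them is in $\mathcal L$; (iv) if $L_1,L_2\in\mathcal L$, then every line equidistant from $L_1$ and $L_2$ is in $\mathcal L$ (the midline if they are parallel, the angle bisectors if they intersect); (v) if $L_1,L_2\in\mathcal L$, then the mirror reflection of $L_2$ across $L_1$ is in $\mathcal L$. A set $\mathcal P\subset\mathbb R^2$ is closed under origami constructions if there is a collection of lines $\mathcal L$ with $(\mathcal P,\mathcal L)$ an origami pair. The set of origami constructible points is $\mathcal P_0=\bigcap\{\mathcal P : (0,0),(0,1)\in\mathcal P \text{ and } \mathcal P \text{ is closed under origami constructions}\}$. The set of origami numbers is $\mathbb F_0=\{\alpha\in\mathbb R : \exists v_1,v_2\in\mathcal P_0,\ |\alpha|=\operatorname{dist}(v_1,v_2)\}$. *)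

(* Defs.v *)
From Stdlib Require Import Reals.
Open Scope R_scope.

Definition Point : Type := (R * R)%type.

(** A line is given by coefficients (a, b, c) with (a, b) <> (0, 0);
    its points are those p with a * p.x + b * p.y = c.  Collections of lines
    are predicates on coefficient triples; "a line (as a point set) belongs to
    the collection" means some triple in the collection has that point set. *)
Definition Line : Type := (R * R * R)%type.

Definition lA (l : Line) : R := fst (fst l).
Definition lB (l : Line) : R := snd (fst l).
Definition lC (l : Line) : R := snd l.

Definition valid_line (l : Line) : Prop := lA l <> 0 \/ lB l <> 0.

Definition on_line (l : Line) (p : Point) : Prop :=
  lA l * fst p + lB l * snd p = lC l.

Definition has_line (Lc : Line -> Prop) (S : Point -> Prop) : Prop :=
  exists l, Lc l /\ forall p, on_line l p <-> S p.

Definition sqdist (p q : Point) : R :=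
  (fst p - fst q)^2 + (snd p - snd q)^2.

Definition dist (p q : Point) : R := sqrt (sqdist p q).

Definition dist_line (p : Point) (l : Line) : R :=
  Rabs (lA l * fst p + lB l * snd p - lC l) / sqrt (lA l ^ 2 + lB l ^ 2).

Definition reflect (l : Line) (p : Point) : Point :=
  let t := 2 * (lA l * fst p + lB l * snd p - lC l) / (lA l ^ 2 + lB l ^ 2) in
  (fst p - t * lA l, snd p - t * lB l).

Definition parallel (l1 l2 : Line) : Prop := lA l1 * lB l2 - lA l2 * lB l1 = 0.

Definition same_line (l1 l2 : Line) : Prop := forall p, on_line l1 p <-> on_line l2 p.

Definition origami_pair (P : Point -> Prop) (Lc : Line -> Prop) : Prop :=
  (forall l, Lc l -> valid_line l) /\
  (forall l1 l2 p, Lc l1 -> Lc l2 -> ~ parallel l1 l2 ->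
     on_line l1 p -> on_line l2 p -> P p) /\
  (forall p q, P p -> P q -> p <> q ->
     has_line Lc (fun r => (fst r - fst p) * (snd q - snd p)
                           = (snd r - snd p) * (fst q - fst p))) /\
  (forall p q, P p -> P q -> p <> q ->
     has_line Lc (fun r => sqdist r p = sqdist r q)) /\
  (forall l1 l2 l, Lc l1 -> Lc l2 -> ~ same_line l1 l2 -> valid_line l ->
     (forall p, on_line l p -> dist_line p l1 = dist_line p l2) ->
     has_line Lc (on_line l)) /\
  (forall l1 l2, Lc l1 -> Lc l2 ->
     has_line Lc (fun p => on_line l2 (reflect l1 p))).

Definition closed_origami (P : Point -> Prop) : Prop :=
  exists Lc, origami_pair P Lc.

Definition P0 (p : Point) : Prop :=
  forall P : Point -> Prop,
    P (0, 0) -> P (0, 1) -> closed_origami P -> P p.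

Definition F0 (a : R) : Prop :=
  exists v1 v2, P0 v1 /\ P0 v2 /\ Rabs a = dist v1 v2.

(* Main.v *)
Require Import Defs.
From Stdlib Require Import Reals Lra Psatz.
Open Scope R_scope.

Lemma valid_N l : valid_line l -> 0 < lA l ^ 2 + lB l ^ 2.
Proof. intros [H|H]; simpl; nra. Qed.

Lemma pt_on l : valid_line l -> exists p, on_line l p.
Proof.
  intros [H|H].
  - exists (lC l / lA l, 0). unfold on_line; simpl. field; auto.
  - exists (0, lC l / lB l). unfold on_line; simpl. field; auto.
Qed.

Lemma shift_on l p t : on_line l p -> on_line l (fst p - t * lB l, snd p + t * lA l).
Proof. unfold on_line; simpl; intros; nra. Qed.

Lemma orth a b a' b' dx dy : (a <> 0 \/ b <> 0) -> a * dx + b * dy = 0 ->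
  a' * b = b' * a -> a' * dx + b' * dy = 0.
Proof.
  intros [H|H] E1 E2.
  - assert (E : a * (a' * dx + b' * dy) = a' * (a * dx + b * dy) - dy * (a' * b - b' * a)) by ring.
    rewrite E1, E2 in E. replace (b' * a - b' * a) with 0 in E by ring.
    assert (a * (a' * dx + b' * dy) = 0) by lra.
    destruct (Rmult_integral _ _ H0); [contradiction|auto].
  - assert (E : b * (a' * dx + b' * dy) = b' * (a * dx + b * dy) + dx * (a' * b - b' * a)) by ring.
    rewrite E1, E2 in E. replace (b' * a - b' * a) with 0 in E by ring.
    assert (b * (a' * dx + b' * dy) = 0) by lra.
    destruct (Rmult_integral _ _ H0); [contradiction|auto].
Qed.

Lemma subset_line l m : valid_line l -> valid_line m ->
  (forall p, on_line l p -> on_line m p) -> forall p, on_line m p -> on_line l p.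
Proof.
  intros Hl Hm Hs p Hp.
  destruct (pt_on l Hl) as [p0 H0].
  pose proof (Hs _ H0) as H0m.
  pose proof (Hs _ (shift_on l p0 1 H0)) as H1m.
  unfold on_line in *; simpl in *.
  assert (Hpar : lA l * lB m = lB l * lA m) by nra.
  assert (E := orth (lA m) (lB m) (lA l) (lB l) (fst p - fst p0) (snd p - snd p0) Hm).
  assert (lA l * (fst p - fst p0) + lB l * (snd p - snd p0) = 0).
  { apply E; [lra|lra]. }
  lra.
Qed.


Lemma line_rep l l0 : valid_line l -> valid_line l0 ->
  (forall p, on_line l p <-> on_line l0 p) ->
  exists k, k <> 0 /\ lA l = k * lA l0 /\ lB l = k * lB l0 /\ lC l = k * lC l0.
Proof.
  intros Hl Hl0 He.
  destruct Hl0 as [H|H].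
  - pose (p1 := (lC l0 / lA l0, 0)). pose (p2 := ((lC l0 - lB l0) / lA l0, 1)).
    assert (E1 : on_line l p1) by (apply He; unfold on_line, p1; simpl; field; auto).
    assert (E2 : on_line l p2) by (apply He; unfold on_line, p2; simpl; field; auto).
    unfold on_line, p1, p2 in *; simpl in *.
    exists (lA l / lA l0).
    assert (EC : lC l = lA l / lA l0 * lC l0) by (rewrite <- E1; field; auto).
    assert (EB : lB l = lA l / lA l0 * lB l0).
    { replace (lB l) with (lC l - lA l * ((lC l0 - lB l0) / lA l0)) by lra.
      rewrite EC. field; auto. }
    split; [|split; [field; auto|split; auto]].
    intro Hk. destruct Hl as [Ha|Hb].
    + apply Ha. replace (lA l) with (lA l / lA l0 * lA l0) by (field; auto). rewrite Hk; ring.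
    + apply Hb. rewrite EB, Hk; ring.
  - pose (p1 := (0, lC l0 / lB l0)). pose (p2 := (1, (lC l0 - lA l0) / lB l0)).
    assert (E1 : on_line l p1) by (apply He; unfold on_line, p1; simpl; field; auto).
    assert (E2 : on_line l p2) by (apply He; unfold on_line, p2; simpl; field; auto).
    unfold on_line, p1, p2 in *; simpl in *.
    exists (lB l / lB l0).
    assert (EC : lC l = lB l / lB l0 * lC l0) by (rewrite <- E1; field; auto).
    assert (EA : lA l = lB l / lB l0 * lA l0).
    { replace (lA l) with (lC l - lB l * ((lC l0 - lA l0) / lB l0)) by lra.
      rewrite EC. field; auto. }
    split; [|split; [auto|split; [field; auto|auto]]].
    intro Hk. destruct Hl as [Ha|Hb].
    + apply Ha. rewrite EA, Hk; ring.
    + apply Hb. replace (lB l) with (lB l / lB l0 * lB l0) by (field; auto). rewrite Hk; ring.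
Qed.

Lemma dist_line_scale p l l0 k : k <> 0 -> valid_line l0 ->
  lA l = k * lA l0 -> lB l = k * lB l0 -> lC l = k * lC l0 ->
  dist_line p l = dist_line p l0.
Proof.
  intros Hk Hv EA EB EC. pose proof (valid_N _ Hv) as HN.
  unfold dist_line. rewrite EA, EB, EC.
  replace ((k * lA l0) ^ 2 + (k * lB l0) ^ 2) with (Rsqr k * (lA l0 ^ 2 + lB l0 ^ 2)) by (unfold Rsqr; ring).
  rewrite sqrt_mult by (try apply Rle_0_sqr; lra).
  rewrite sqrt_Rsqr_abs.
  replace (k * lA l0 * fst p + k * lB l0 * snd p - k * lC l0) with (k * (lA l0 * fst p + lB l0 * snd p - lC l0)) by ring.
  rewrite Rabs_mult. assert (Rabs k <> 0) by (apply Rabs_no_R0; auto).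
  assert (sqrt (lA l0 ^ 2 + lB l0 ^ 2) <> 0) by (apply Rgt_not_eq, sqrt_lt_R0; lra).
  field. split; auto.
Qed.

Lemma reflect_scale p l l0 k : k <> 0 -> valid_line l0 ->
  lA l = k * lA l0 -> lB l = k * lB l0 -> lC l = k * lC l0 ->
  reflect l p = reflect l0 p.
Proof.
  intros Hk Hv EA EB EC. pose proof (valid_N _ Hv) as HN.
  assert (Hk2 : 0 < k * k) by (destruct (Rlt_or_le 0 k); nra).
  unfold reflect. rewrite EA, EB, EC. f_equal; field; split; nra.
Qed.

Lemma on_line_scale p l l0 k : k <> 0 ->
  lA l = k * lA l0 -> lB l = k * lB l0 -> lC l = k * lC l0 ->
  (on_line l p <-> on_line l0 p).
Proof.
  intros Hk EA EB EC. unfold on_line. rewrite EA, EB, EC. split; intro H.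
  - apply (Rmult_eq_reg_l k); auto. rewrite <- H; ring.
  - rewrite <- H; ring.
Qed.

Definition HL (Lc : Line -> Prop) (l0 : Line) := exists l, Lc l /\ forall p, on_line l p <-> on_line l0 p.

Section PartA.
Variables (P : Point -> Prop) (Lc : Line -> Prop).
Hypothesis H : origami_pair P Lc.

Lemma A_rep l0 : HL Lc l0 -> valid_line l0 -> exists l, Lc l /\ exists k, k <> 0 /\
  lA l = k * lA l0 /\ lB l = k * lB l0 /\ lC l = k * lC l0.
Proof.
  intros [l [Hl He]] Hv. exists l; split; auto.
  apply line_rep; auto. destruct H as [Hval _]. auto.
Qed.

Lemma A_inter l1 l2 p : HL Lc l1 -> HL Lc l2 -> valid_line l1 -> valid_line l2 ->
  ~ parallel l1 l2 -> on_line l1 p -> on_line l2 p -> P p.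
Proof.
  intros H1 H2 V1 V2 Hnp O1 O2.
  destruct (A_rep _ H1 V1) as [m1 [M1 [k1 [K1 [A1 [B1 C1]]]]]].
  destruct (A_rep _ H2 V2) as [m2 [M2 [k2 [K2 [A2 [B2 C2]]]]]].
  destruct H as [_ [Hi _]]. apply (Hi m1 m2); auto.
  - unfold parallel in *. rewrite A1, B1, A2, B2. intro E. apply Hnp.
    replace (k1 * lA l1 * (k2 * lB l2) - k2 * lA l2 * (k1 * lB l1)) with ((k1 * k2) * (lA l1 * lB l2 - lA l2 * lB l1)) in E by ring.
    destruct (Rmult_integral _ _ E) as [E'|E']; auto.
    destruct (Rmult_integral _ _ E'); contradiction.
  - apply (on_line_scale p m1 l1 k1); auto.
  - apply (on_line_scale p m2 l2 k2); auto.
Qed.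

Lemma A_through p q l0 : P p -> P q -> p <> q ->
  (forall r, on_line l0 r <-> (fst r - fst p) * (snd q - snd p) = (snd r - snd p) * (fst q - fst p)) ->
  HL Lc l0.
Proof.
  intros Hp Hq Hpq E. destruct H as [_ [_ [Ht _]]].
  destruct (Ht p q Hp Hq Hpq) as [l [Hl He]]. exists l; split; auto.
  intro r. rewrite He, E. tauto.
Qed.

Lemma A_bisect p q l0 : P p -> P q -> p <> q ->
  (forall r, on_line l0 r <-> sqdist r p = sqdist r q) -> HL Lc l0.
Proof.
  intros Hp Hq Hpq E. destruct H as [_ [_ [_ [Ht _]]]].
  destruct (Ht p q Hp Hq Hpq) as [l [Hl He]]. exists l; split; auto.
  intro r. rewrite He, E. tauto.
Qed.

Lemma A_equi l1 l2 l q : HL Lc l1 -> HL Lc l2 -> valid_line l1 -> valid_line l2 -> valid_line l ->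
  on_line l1 q -> ~ on_line l2 q ->
  (forall p, on_line l p -> dist_line p l1 = dist_line p l2) -> HL Lc l.
Proof.
  intros H1 H2 V1 V2 V Q1 Q2 Hd.
  destruct (A_rep _ H1 V1) as [m1 [M1 [k1 [K1 [A1 [B1 C1]]]]]].
  destruct (A_rep _ H2 V2) as [m2 [M2 [k2 [K2 [A2 [B2 C2]]]]]].
  destruct H as [_ [_ [_ [_ [He _]]]]].
  destruct (He m1 m2 l M1 M2) as [m [Mm Em]]; auto.
  - intro S. apply Q2. apply (on_line_scale q m2 l2 k2); auto. apply S.
    apply (on_line_scale q m1 l1 k1); auto.
  - intros p Hp. rewrite (dist_line_scale p m1 l1 k1), (dist_line_scale p m2 l2 k2); auto.
  - exists m; split; auto.
Qed.

Lemma A_refl l1 l2 l3 : HL Lc l1 -> HL Lc l2 -> valid_line l1 -> valid_line l2 ->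
  (forall p, on_line l2 (reflect l1 p) <-> on_line l3 p) -> HL Lc l3.
Proof.
  intros H1 H2 V1 V2 E.
  destruct (A_rep _ H1 V1) as [m1 [M1 [k1 [K1 [A1 [B1 C1]]]]]].
  destruct (A_rep _ H2 V2) as [m2 [M2 [k2 [K2 [A2 [B2 C2]]]]]].
  destruct H as [_ [_ [_ [_ [_ Hr]]]]].
  destruct (Hr m1 m2 M1 M2) as [m [Mm Em]].
  exists m; split; auto. intro p. rewrite Em, <- E.
  rewrite (reflect_scale p m1 l1 k1); auto.
  apply (on_line_scale _ m2 l2 k2); auto.
Qed.
End PartA.

Definition mkL (a b c : R) : Line := ((a, b), c).
Ltac nlra := unfold mkL, lA, lB, lC in *; simpl in *; try intro; lra.

Lemma construct (P : Point -> Prop) (Lc : Line -> Prop) :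
  P (0, 0) -> P (0, 1) -> origami_pair P Lc ->
  P (sqrt 2 / 2, sqrt 2 / 2) /\ P (0, -1).
Proof.
  intros HA HB H.
  assert (Hs : sqrt 2 * sqrt 2 = 2) by (apply sqrt_sqrt; lra).
  assert (Hs0 : 0 < sqrt 2) by (apply sqrt_lt_R0; lra).
  set (s := sqrt 2) in *.
  assert (V01 : forall c, valid_line (mkL 0 1 c)) by (intro; unfold valid_line; right; nlra).
  assert (V10 : forall c, valid_line (mkL 1 0 c)) by (intro; unfold valid_line; left; nlra).
  assert (Lx0 : HL Lc (mkL 1 0 0)).
  { apply (A_through P Lc H (0,0) (0,1)); auto.
    - intro E; inversion E; lra.
    - intro r; unfold on_line, mkL, lA, lB, lC; simpl; split; intro; lra. }
  assert (Lh : HL Lc (mkL 0 1 (1/2))).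
  { apply (A_bisect P Lc H (0,0) (0,1)); auto.
    - intro E; inversion E; lra.
    - intro r; unfold on_line, sqdist, mkL, lA, lB, lC; simpl; split; intro; nra. }
  assert (PM : P (0, 1/2)).
  { apply (A_inter P Lc H (mkL 1 0 0) (mkL 0 1 (1/2))); auto;
      unfold parallel, on_line; nlra. }
  assert (Lq : HL Lc (mkL 0 1 (1/4))).
  { apply (A_bisect P Lc H (0,0) (0,1/2)); auto.
    - intro E; inversion E; lra.
    - intro r; unfold on_line, sqdist, mkL, lA, lB, lC; simpl; split; intro; nra. }
  assert (Ly0 : HL Lc (mkL 0 1 0)).
  { apply (A_refl P Lc H (mkL 0 1 (1/4)) (mkL 0 1 (1/2))); auto.
    intro p; unfold on_line, reflect, mkL, lA, lB, lC; simpl; split; intro E; field_simplify in E; lra. }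
  assert (L1 : HL Lc (mkL 0 1 1)).
  { apply (A_refl P Lc H (mkL 0 1 (1/2)) (mkL 0 1 0)); auto.
    intro p; unfold on_line, reflect, mkL, lA, lB, lC; simpl; split; intro E; field_simplify in E; lra. }
  assert (Lm1 : HL Lc (mkL 0 1 (-1))).
  { apply (A_refl P Lc H (mkL 0 1 0) (mkL 0 1 1)); auto.
    intro p; unfold on_line, reflect, mkL, lA, lB, lC; simpl; split; intro E; field_simplify in E; lra. }
  assert (PD : P (0, -1)).
  { apply (A_inter P Lc H (mkL 1 0 0) (mkL 0 1 (-1))); auto;
      unfold parallel, on_line; nlra. }
  split; auto.
  assert (Ld : HL Lc (mkL 1 (-1) 0)).
  { apply (A_equi P Lc H (mkL 1 0 0) (mkL 0 1 0) (mkL 1 (-1) 0) (0,1)); auto.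
    - unfold valid_line; left; nlra.
    - unfold on_line; nlra.
    - unfold on_line; nlra.
    - intros p Hp; unfold on_line, dist_line, mkL, lA, lB, lC in *; cbn [fst snd] in *.
      replace (1 ^ 2 + 0 ^ 2) with 1 by ring. replace (0 ^ 2 + 1 ^ 2) with 1 by ring.
      f_equal. f_equal. lra. }
  assert (L67 : HL Lc (mkL (s + 1) (-1) 0)).
  { apply (A_equi P Lc H (mkL 1 0 0) (mkL 1 (-1) 0) (mkL (s + 1) (-1) 0) (0,1)); auto.
    - unfold valid_line; left; nlra.
    - unfold valid_line; left; nlra.
    - unfold on_line; nlra.
    - unfold on_line; nlra.
    - intros p Hp; unfold on_line, dist_line, mkL, lA, lB, lC in *; cbn [fst snd] in *.
      replace (1 ^ 2 + 0 ^ 2) with 1 by ring. replace (1 ^ 2 + (-1) ^ 2) with 2 by ring.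
      rewrite sqrt_1. fold s.
      replace (1 * fst p + -1 * snd p - 0) with (s * (- fst p)) by nra.
      rewrite Rabs_mult, (Rabs_pos_eq s) by lra. rewrite Rabs_Ropp.
      field_simplify; [f_equal; ring | lra]. }
  assert (Lt : HL Lc (mkL 1 1 s)).
  { apply (A_refl P Lc H (mkL (s + 1) (-1) 0) (mkL 0 1 1)); auto.
    - unfold valid_line; left; nlra.
    - intro p; unfold on_line, reflect, mkL, lA, lB, lC; cbn [fst snd].
      set (N := (s + 1) ^ 2 + (-1) ^ 2).
      assert (EN : N = 4 + 2 * s) by (unfold N; nra).
      assert (E : 0 * (fst p - 2 * ((s + 1) * fst p + -1 * snd p - 0) / N * (s + 1)) +
                  1 * (snd p - 2 * ((s + 1) * fst p + -1 * snd p - 0) / N * -1) - 1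
                = (2 + 2 * s) / N * (1 * fst p + 1 * snd p - s)).
      { rewrite EN. unfold Rdiv. set (d := / (4 + 2 * s)). assert (Hd : (4 + 2 * s) * d = 1) by (apply Rinv_r; lra). clearbody d.
        assert (H1 : (4 + 2 * s) * d * snd p = snd p) by (rewrite Hd; ring).
        assert (H2 : s * s * d = 2 * d) by (rewrite Hs; ring). lra. }
      assert (0 < (2 + 2 * s) / N) by (rewrite EN; apply Rdiv_lt_0_compat; lra).
      split; intro E'.
      + assert ((2 + 2 * s) / N * (1 * fst p + 1 * snd p - s) = 0) by lra.
        destruct (Rmult_integral _ _ H1); lra.
      + rewrite E' in E. lra. }
  { apply (A_inter P Lc H (mkL 1 1 s) (mkL 1 (-1) 0)); auto;
      try (unfold valid_line; left; nlra); unfold parallel, on_line; nlra. }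
Qed.

Definition lval (m : Line) (p : Point) := lA m * fst p + lB m * snd p - lC m.

Lemma abcd a b c d : a * c = 0 -> (a + b) * (c + d) = 0 -> (a - b) * (c - d) = 0 ->
  (a = 0 /\ b = 0) \/ (c = 0 /\ d = 0).
Proof.
  intros E0 E1 E2.
  assert (Ebd : b * d = 0) by nra. assert (Ead : a * d + b * c = 0) by nra.
  destruct (Req_dec a 0) as [Ha|Ha].
  - subst a. destruct (Req_dec b 0) as [Hb|Hb]; [left; auto|right].
    split; apply (Rmult_eq_reg_l b); auto; lra.
  - assert (c = 0) by (apply (Rmult_eq_reg_l a); auto; lra). subst c.
    right; split; auto. apply (Rmult_eq_reg_l a); auto; lra.
Qed.

Lemma prod_zero_line l m1 m2 : valid_line l ->
  (forall p, on_line l p -> lval m1 p * lval m2 p = 0) ->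
  (forall p, on_line l p -> lval m1 p = 0) \/ (forall p, on_line l p -> lval m2 p = 0).
Proof.
  intros Vl Hz. destruct (pt_on l Vl) as [p0 H0].
  assert (Eg : forall m t, lval m (fst p0 - t * lB l, snd p0 + t * lA l)
     = lval m p0 + t * (- lA m * lB l + lB m * lA l)) by (intros; unfold lval; simpl; ring).
  pose proof (Hz _ (shift_on l p0 0 H0)) as Z0.
  pose proof (Hz _ (shift_on l p0 1 H0)) as Z1.
  pose proof (Hz _ (shift_on l p0 (-1) H0)) as Z2.
  rewrite !Eg in Z0, Z1, Z2.
  set (b1 := - lA m1 * lB l + lB m1 * lA l) in *.
  set (b2 := - lA m2 * lB l + lB m2 * lA l) in *.
  assert (G : forall m, lval m p0 = 0 -> - lA m * lB l + lB m * lA l = 0 ->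
            forall p, on_line l p -> lval m p = 0).
  { intros m Hm0 Hm1 p Hp. unfold on_line in *.
    assert (lA m * (fst p - fst p0) + lB m * (snd p - snd p0) = 0).
    { apply (orth (lA l) (lB l)); auto; lra. }
    unfold lval in *; lra. }
  destruct (abcd (lval m1 p0) b1 (lval m2 p0) b2) as [[Ka Kb]|[Kc Kd]].
  - replace (lval m1 p0 * lval m2 p0) with ((lval m1 p0 + 0 * b1) * (lval m2 p0 + 0 * b2)) by ring. exact Z0.
  - replace (lval m1 p0 + b1) with (lval m1 p0 + 1 * b1) by ring.
    replace (lval m2 p0 + b2) with (lval m2 p0 + 1 * b2) by ring. exact Z1.
  - replace (lval m1 p0 - b1) with (lval m1 p0 + -1 * b1) by ring.
    replace (lval m2 p0 - b2) with (lval m2 p0 + -1 * b2) by ring. exact Z2.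
  - left; apply G; auto.
  - right; apply G; auto.
Qed.

Section PartB.
Variable K : R -> Prop.
Hypothesis K0 : K 0.
Hypothesis K1 : K 1.
Hypothesis Kplus : forall a b, K a -> K b -> K (a + b).
Hypothesis Kopp : forall a, K a -> K (- a).
Hypothesis Kmult : forall a b, K a -> K b -> K (a * b).
Hypothesis Kinv : forall a, K a -> K (/ a).
Hypothesis Ksqrt : forall a b, K a -> K b -> K (sqrt (a * a + b * b)).

Lemma Kminus a b : K a -> K b -> K (a - b).
Proof. intros; unfold Rminus; auto. Qed.
Lemma Kdiv a b : K a -> K b -> K (a / b).
Proof. intros; unfold Rdiv; auto. Qed.
Lemma K2 : K 2.
Proof. replace 2 with (1 + 1) by ring. auto. Qed.

Definition Kp (p : Point) := K (fst p) /\ K (snd p).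
Definition KL (l : Line) := valid_line l /\ K (lA l) /\ K (lB l) /\ K (lC l).

Lemma KL_has S l : KL l -> (forall p, on_line l p <-> S p) -> has_line KL S.
Proof. intros; exists l; auto. Qed.

Lemma finish l1 l2 l a b c : valid_line l -> ~ same_line l1 l2 -> K a -> K b -> K c ->
  (forall p, on_line l p -> a * fst p + b * snd p - c = 0) ->
  (forall p, a * fst p + b * snd p - c = 0 -> (on_line l1 p <-> on_line l2 p)) ->
  has_line KL (on_line l).
Proof.
  intros Vl Hns Ka Kb Kc Hv Hs.
  destruct (pt_on l Vl) as [p0 H0].
  assert (Gen : a <> 0 \/ b <> 0).
  { destruct (Req_dec a 0) as [Ea|Ea]; [|left; auto].
    destruct (Req_dec b 0) as [Eb|Eb]; [|right; auto].
    exfalso. apply Hns. pose proof (Hv p0 H0) as E. subst a b.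
    intro p; apply Hs. lra. }
  assert (Vm : valid_line (mkL a b c)) by (unfold valid_line, mkL, lA, lB; simpl; auto).
  exists (mkL a b c). split.
  - unfold KL; repeat split; auto.
  - intro p. split.
    + apply (subset_line l (mkL a b c) Vl Vm).
      intros q Hq. pose proof (Hv q Hq). unfold on_line, mkL, lA, lB, lC; simpl; lra.
    + intro Hp. pose proof (Hv p Hp). unfold on_line, mkL, lA, lB, lC; simpl; lra.
Qed.

Lemma KL_equi l1 l2 l : KL l1 -> KL l2 -> ~ same_line l1 l2 -> valid_line l ->
  (forall p, on_line l p -> dist_line p l1 = dist_line p l2) -> has_line KL (on_line l).
Proof.
  intros HK1 HK2 Hns Vl Hd.
  destruct l1 as [[a1 b1] c1]; destruct l2 as [[a2 b2] c2].
  destruct HK1 as [V1 [A1 [B1 C1]]]; destruct HK2 as [V2 [A2 [B2 C2]]].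
  unfold valid_line, lA, lB, lC in *; simpl in *.
  assert (N1 : 0 < a1 * a1 + b1 * b1) by (destruct V1; nra).
  assert (N2 : 0 < a2 * a2 + b2 * b2) by (destruct V2; nra).
  set (n1 := sqrt (a1 * a1 + b1 * b1)). set (n2 := sqrt (a2 * a2 + b2 * b2)).
  assert (n1p : 0 < n1) by (apply sqrt_lt_R0; auto).
  assert (n2p : 0 < n2) by (apply sqrt_lt_R0; auto).
  assert (Kn1 : K n1) by (apply Ksqrt; auto).
  assert (Kn2 : K n2) by (apply Ksqrt; auto).
  set (v1 := fun p : Point => a1 * fst p + b1 * snd p - c1).
  set (v2 := fun p : Point => a2 * fst p + b2 * snd p - c2).
  assert (Hsq : forall p, on_line l p ->
     (v1 p / n1 - v2 p / n2) * (v1 p / n1 + v2 p / n2) = 0).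
  { intros p Hp. pose proof (Hd p Hp) as E. unfold dist_line, lA, lB, lC in E; simpl in E.
    replace (a1 * (a1 * 1) + b1 * (b1 * 1)) with (a1 * a1 + b1 * b1) in E by ring.
    replace (a2 * (a2 * 1) + b2 * (b2 * 1)) with (a2 * a2 + b2 * b2) in E by ring.
    fold n1 n2 in E.
    assert (E' : Rabs (v1 p / n1) = Rabs (v2 p / n2)).
    { unfold Rdiv. rewrite !Rabs_mult, !Rabs_inv, (Rabs_pos_eq n1), (Rabs_pos_eq n2) by lra.
      exact E. }
    revert E'. generalize (v1 p / n1) (v2 p / n2). intros u w E'.
    unfold Rabs in E'. destruct (Rcase_abs u); destruct (Rcase_abs w); nra. }
  assert (Same : forall e p, (e = 1 \/ e = -1) -> v1 p / n1 - e * (v2 p / n2) = 0 ->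
             (on_line (a1, b1, c1) p <-> on_line (a2, b2, c2) p)).
  { intros e p He Hp.
    assert (X : v1 p = (e * n1 / n2) * v2 p).
    { replace (v1 p) with (n1 * (v1 p / n1)) by (field; lra).
      replace (v1 p / n1) with (e * (v2 p / n2)) by lra. field; lra. }
    assert (Xn : e * n1 / n2 <> 0).
    { destruct He; subst e; unfold Rdiv; apply Rmult_integral_contrapositive; split;
        try (apply Rinv_neq_0_compat); lra. }
    assert (O1 : on_line (a1, b1, c1) p <-> v1 p = 0) by (unfold on_line, v1, lA, lB, lC; simpl; split; intro; lra).
    assert (O2 : on_line (a2, b2, c2) p <-> v2 p = 0) by (unfold on_line, v2, lA, lB, lC; simpl; split; intro; lra).
    rewrite O1, O2, X. split; intro E.
    - destruct (Rmult_integral _ _ E); [contradiction|auto].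
    - rewrite E; ring. }
  destruct (prod_zero_line l (mkL (a1 / n1 - a2 / n2) (b1 / n1 - b2 / n2) (c1 / n1 - c2 / n2))
                             (mkL (a1 / n1 + a2 / n2) (b1 / n1 + b2 / n2) (c1 / n1 + c2 / n2)) Vl)
    as [Z|Z].
  - intros p Hp. unfold lval, mkL, lA, lB, lC; simpl. rewrite <- (Hsq p Hp). unfold v1, v2. field. lra.
  - apply (finish _ _ l (a1 / n1 - a2 / n2) (b1 / n1 - b2 / n2) (c1 / n1 - c2 / n2) Vl Hns);
      auto using Kminus, Kdiv.
    + intros p Hp. apply (Same 1); auto. rewrite <- Hp. unfold v1, v2. field. lra.
  - apply (finish _ _ l (a1 / n1 + a2 / n2) (b1 / n1 + b2 / n2) (c1 / n1 + c2 / n2) Vl Hns);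
      auto using Kplus, Kdiv.
    + intros p Hp. apply (Same (-1)); auto. rewrite <- Hp. unfold v1, v2. field. lra.
Qed.

Lemma KK_origami : origami_pair Kp KL.
Proof.
  split; [intros l [V _]; exact V|].
  split.
  {
    intros l1 l2 p [V1 [A1 [B1 C1]]] [V2 [A2 [B2 C2]]] Hnp O1 O2.
    unfold parallel in Hnp. unfold on_line in O1, O2.
    assert (Ex : fst p = (lC l1 * lB l2 - lC l2 * lB l1) / (lA l1 * lB l2 - lA l2 * lB l1)).
    { rewrite <- O1, <- O2. field. auto. }
    assert (Ey : snd p = (lA l1 * lC l2 - lA l2 * lC l1) / (lA l1 * lB l2 - lA l2 * lB l1)).
    { rewrite <- O1, <- O2. field. auto. }
    split; [rewrite Ex|rewrite Ey]; apply Kdiv; apply Kminus; auto. }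
  split.
  {
    intros [px py] [qx qy] [Kpx Kpy] [Kqx Kqy] Hpq; simpl in *.
    apply (KL_has _ (mkL (qy - py) (px - qx) ((qy - py) * px + (px - qx) * py))).
    - unfold KL, mkL, valid_line, lA, lB, lC; simpl.
      split; [|repeat split; auto using Kminus, Kplus, Kmult].
      destruct (Req_dec (qy - py) 0); [right|left; auto].
      intro E; apply Hpq; f_equal; lra.
    - intro r; unfold on_line, mkL, lA, lB, lC; simpl; split; intro; nra. }
  split.
  {
    intros [px py] [qx qy] [Kpx Kpy] [Kqx Kqy] Hpq; simpl in *.
    apply (KL_has _ (mkL (2 * (qx - px)) (2 * (qy - py)) (qx * qx + qy * qy - px * px - py * py))).
    - unfold KL, mkL, valid_line, lA, lB, lC; simpl.
      split; [|repeat split; auto 6 using Kminus, Kplus, Kmult, K2].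
      destruct (Req_dec (qy - py) 0); [left|right]; intro E; [apply Hpq; f_equal|]; lra.
    - intro r; unfold on_line, sqdist, mkL, lA, lB, lC; simpl; split; intro; nra. }
  split.
  {
    intros l1 l2 l H1 H2 Hns Vl Hd. exact (KL_equi l1 l2 l H1 H2 Hns Vl Hd). }
  {
    intros [[a1 b1] c1] [[a2 b2] c2] [V1 [A1 [B1 C1]]] [V2 [A2 [B2 C2]]].
    unfold valid_line, lA, lB, lC in *; simpl in *.
    assert (N1 : 0 < a1 * a1 + b1 * b1) by (destruct V1; nra).
    assert (N2 : 0 < a2 * a2 + b2 * b2) by (destruct V2; nra).
    set (k := 2 * (a1 * a2 + b1 * b2) / (a1 * a1 + b1 * b1)).
    assert (Kk : K k) by (unfold k; auto 7 using Kdiv, Kmult, Kplus, K2).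
    apply (KL_has _ (mkL (a2 - k * a1) (b2 - k * b1) (c2 - k * c1))).
    - unfold KL, mkL, valid_line, lA, lB, lC; simpl.
      split; [|repeat split; auto using Kminus, Kmult].
      assert (E : (a2 - k * a1) * (a2 - k * a1) + (b2 - k * b1) * (b2 - k * b1) = a2 * a2 + b2 * b2).
      { unfold k. field. lra. }
      destruct (Req_dec (a2 - k * a1) 0) as [Ea|Ea]; [right|left; auto].
      intro Eb. rewrite Ea, Eb in E. lra.
    - intro p. unfold on_line, reflect, mkL, lA, lB, lC; simpl.
      assert (E : a2 * (fst p - 2 * (a1 * fst p + b1 * snd p - c1) / (a1 * (a1 * 1) + b1 * (b1 * 1)) * a1) +
         b2 * (snd p - 2 * (a1 * fst p + b1 * snd p - c1) / (a1 * (a1 * 1) + b1 * (b1 * 1)) * b1) - c2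
         = (a2 - k * a1) * fst p + (b2 - k * b1) * snd p - (c2 - k * c1)).
      { unfold k. field. lra. }
      split; intro; lra. }
Qed.
End PartB.


Lemma final_generic (K : R -> Prop)
  (K0 : K 0) (K1 : K 1)
  (Kplus : forall a b, K a -> K b -> K (a + b))
  (Kopp : forall a, K a -> K (- a))
  (Kmult : forall a b, K a -> K b -> K (a * b))
  (Kinv : forall a, K a -> K (/ a))
  (Ksqrt : forall a b, K a -> K b -> K (sqrt (a * a + b * b)))
  (Knot : ~ K (sqrt (1 + sqrt 2))) :
  F0 (sqrt (2 + sqrt 2)) /\ F0 1 /\
  sqrt ((sqrt (2 + sqrt 2)) ^ 2 - 1 ^ 2) = sqrt (1 + sqrt 2) /\
  ~ F0 (sqrt (1 + sqrt 2)) /\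
  ~ (forall h a : R, 0 < a -> a < h -> F0 h -> F0 a -> F0 (sqrt (h ^ 2 - a ^ 2))).
Proof.
  assert (Hs : sqrt 2 * sqrt 2 = 2) by (apply sqrt_sqrt; lra).
  assert (Hs0 : 0 < sqrt 2) by (apply sqrt_lt_R0; lra).
  assert (F1 : F0 (sqrt (2 + sqrt 2))).
  { exists (sqrt 2 / 2, sqrt 2 / 2), (0, -1). split; [|split].
    - intros P HA HB [Lc HL]. apply (construct P Lc HA HB HL).
    - intros P HA HB [Lc HL]. apply (construct P Lc HA HB HL).
    - rewrite Rabs_pos_eq by apply sqrt_pos. unfold Defs.dist, sqdist; simpl. f_equal. match goal with |- _ = ?r => assert (T : r = sqrt 2 * sqrt 2 / 2 + sqrt 2 + 1) by field end. rewrite T, Hs. lra. }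
  assert (F2 : F0 1).
  { exists (0, 0), (0, 1). split; [|split].
    - intros P HA HB _; auto.
    - intros P HA HB _; auto.
    - rewrite Rabs_pos_eq by lra. unfold Defs.dist, sqdist; simpl.
      replace ((0 - 0) * ((0 - 0) * 1) + (0 - 1) * ((0 - 1) * 1)) with 1 by ring.
      rewrite sqrt_1; auto. }
  assert (E3 : sqrt ((sqrt (2 + sqrt 2)) ^ 2 - 1 ^ 2) = sqrt (1 + sqrt 2)).
  { rewrite pow2_sqrt by lra. f_equal. ring. }
  assert (N4 : ~ F0 (sqrt (1 + sqrt 2))).
  { intros [v1 [v2 [P1 [P2 E]]]].
    assert (CL : closed_origami (Kp K)).
    { exists (KL K). apply KK_origami; auto. }
    assert (Z1 : Kp K (0, 0)) by (split; simpl; auto).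
    assert (Z2 : Kp K (0, 1)) by (split; simpl; auto).
    destruct (P1 (Kp K) Z1 Z2 CL) as [X1 Y1].
    destruct (P2 (Kp K) Z1 Z2 CL) as [X2 Y2].
    apply Knot. rewrite <- (Rabs_pos_eq (sqrt (1 + sqrt 2))) by apply sqrt_pos.
    rewrite E. unfold Defs.dist, sqdist.
    replace ((fst v1 - fst v2) ^ 2 + (snd v1 - snd v2) ^ 2) with
      ((fst v1 - fst v2) * (fst v1 - fst v2) + (snd v1 - snd v2) * (snd v1 - snd v2)) by ring.
    apply Ksqrt; apply (Kminus K Kplus Kopp); auto. }
  split; [auto|split; [auto|split; [auto|split; [auto|]]]].
  intro Hall. apply N4. rewrite <- E3. apply Hall; auto; try lra.
  rewrite <- sqrt_1 at 1. apply sqrt_lt_1_alt. lra.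
Qed.

From mathcomp Require Import all_boot all_order all_algebra.
From mathcomp Require Import algC algnum cyclotomic.
From mathcomp Require Import Rstruct.
From mathcomp Require Import ring lra.
Import Order.TTheory GRing.Theory Num.Theory.
Local Open Scope ring_scope.
Section Dense.
Variable F : archiRealFieldType.
Lemma rat_dense (x y : F) : x < y -> exists q : rat, x < ratr q < y.
Proof.
move=> xy.
have d0 : 0 < y - x by rewrite subr_gt0.
set n := Num.bound ((y - x)^-1).
have hn : (y - x)^-1 < n%:R by apply: archi_boundP; rewrite invr_ge0 ltW.
have n0 : 0 < n%:R :> F by apply: le_lt_trans hn; rewrite invr_ge0 ltW.
have h1 : 1 < n%:R * (y - x).
  by rewrite -(ltr_pM2r d0) mulVf ?gt_eqF in hn.
set m := (Num.floor (x * n%:R) + 1)%R.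
have xr : x * n%:R \is Num.real by rewrite realE; case: (ltrgt0P (x * n%:R)).
have hm1 : x * n%:R < m%:~R by rewrite /m real_floorD1_gt.
have hm2 : m%:~R <= x * n%:R + 1.
  by rewrite /m intrD lerD2r real_floor_le.
exists (m%:~R / n%:R).
rewrite rmorphM /= fmorphV /= ratr_int ratr_nat.
rewrite ltr_pdivlMr // ltr_pdivrMr // hm1 /=.
apply: le_lt_trans hm2 _; lra.
Qed.
End Dense.
Arguments rat_dense {F x y}.

Section Char.
Variable F : archiRcfType.
Implicit Types x y : F.

Lemma add_char x y q : (ratr q < x + y) <-> exists r, (ratr r < x) && (ratr (q - r) < y).
Proof.
split.
  move=> h; have : ratr q - y < x by rewrite ltrBlDr.
  move=> /rat_dense [r /andP[a b]]; exists r; rewrite b /= rmorphB /=.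
  by rewrite ltrBlDr addrC -ltrBlDr.
move=> [r /andP[a b]]; rewrite rmorphB /= in b; lra.
Qed.

Lemma opp_char x q : (ratr q < - x) = (x < ratr (- q)).
Proof. by rewrite rmorphN /= ltrNr. Qed.

Lemma scale_char x c q : 0 < c -> (ratr q < ratr c * x) = (ratr (q / c) < x).
Proof.
move=> c0; have c0' : 0 < ratr c :> F by rewrite ltr0q.
by rewrite rmorphM /= fmorphV /= (ltr_pdivrMr _ _ c0') mulrC.
Qed.

Lemma sqr_char x q : (ratr q < x ^+ 2) <->
  (q < 0) \/ exists r, [&& 0 <= r, q <= r * r & (ratr r < x) || (x < ratr (- r))].
Proof.
split.
  move=> h; case: (ltP q 0) => q0; first by left.
  right.
  have q0' : 0 <= ratr q :> F by rewrite ler0q.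
  have : Num.sqrt (ratr q) < `|x|.
    by rewrite -sqrtr_sqr ltr_sqrt // (le_lt_trans q0').
  move=> /rat_dense [r /andP[a b]].
  have r0 : 0 < ratr r :> F by apply: le_lt_trans a; exact: sqrtr_ge0.
  exists r; apply/and3P; split.
  - by rewrite -(ler0q F) ltW.
  - rewrite -(ler_rat F) rmorphM /=.
    have := sqr_sqrtr q0'; move=> e.
    have s0 := sqrtr_ge0 (ratr q : F).
    rewrite -e expr2; nra.
  - rewrite rmorphN /=; case: (lerP 0 x) => x0.
      by rewrite ger0_norm // in b; rewrite b.
    by rewrite ltr0_norm // in b; rewrite ltrNr b orbT.
case=> [q0|[r /and3P[r0 qr h]]].
  by apply: lt_le_trans (sqr_ge0 x); rewrite ltrq0.
have r0' : 0 <= ratr r :> F by rewrite ler0q.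
have qr' : ratr q <= ratr r * ratr r :> F by rewrite -rmorphM /= ler_rat.
rewrite rmorphN /= in h; case/orP: h => h; rewrite expr2; nra.
Qed.

Lemma sqrt_char x q : (ratr q < Num.sqrt x) <-> (q < 0) \/ (0 <= q /\ ratr (q * q) < x).
Proof.
split.
  move=> h; case: (ltP q 0) => q0; first by left.
  right; split => //.
  have q0' : 0 <= ratr q :> F by rewrite ler0q.
  case: (ltP 0 x) => x0; last by move: h; rewrite ler0_sqrtr // ltNge q0'.
  rewrite -(ltr_sqrt _ x0) rmorphM /= -expr2 sqrtr_sqr ger0_norm //.
case=> [q0|[q0 h]].
  by apply: lt_le_trans (sqrtr_ge0 x); rewrite ltrq0.
have q0' : 0 <= ratr q :> F by rewrite ler0q.
have x0 : 0 < x by apply: le_lt_trans h; rewrite ler0q mulr_ge0.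
by rewrite -(ltr_sqrt _ x0) rmorphM /= -expr2 sqrtr_sqr ger0_norm in h.
Qed.

Lemma inv_pos_char x q : 0 < x -> (ratr q < x^-1) <-> (q <= 0) \/ (0 < q /\ x < ratr (q^-1)).
Proof.
move=> x0; split.
  move=> h; case: (lerP q 0) => q0; first by left.
  right; split => //; have q0' : 0 < ratr q :> F by rewrite ltr0q.
  by rewrite fmorphV /= -[x]invrK ltf_pV2 // ?posrE ?invr_gt0.
case=> [q0|[q0 h]].
  by apply: le_lt_trans (_ : ratr q <= 0) _; rewrite ?invr_gt0 // lerq0.
have q0' : 0 < ratr q :> F by rewrite ltr0q.
by rewrite -[ratr q]invrK ltf_pV2 // ?posrE ?invr_gt0 // -fmorphV.
Qed.
End Char.

Section Rep.
Variables F1 F2 : archiRcfType.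
Definition rep (x : F1) (y : F2) := forall q : rat, (ratr q < x) = (ratr q < y).
Implicit Types (x : F1) (y : F2).

Lemma rep_sym x y : rep x y -> forall q : rat, (ratr q < y) = (ratr q < x).
Proof. by move=> h q; rewrite h. Qed.

Lemma rep_ratr c : rep (ratr c) (ratr c).
Proof. by move=> q; rewrite !ltr_rat. Qed.

Lemma lt_rep1 (G1 G2 : archiRcfType) (x : G1) (y : G2) :
  (forall q : rat, (ratr q < x) = (ratr q < y)) ->
  forall q : rat, x < ratr q -> y < ratr q.
Proof.
move=> h q xq; have [r /andP[xr rq]] := rat_dense xq.
have : ~~ (ratr r < x) by rewrite -leNgt ltW.
rewrite h -leNgt => yr; apply: le_lt_trans yr _; by rewrite ltr_rat -(ltr_rat G1).
Qed.

Lemma rep_gt {x y} : rep x y -> forall q : rat, (x < ratr q) = (y < ratr q).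
Proof.
move=> h q; apply/idP/idP; first exact: lt_rep1.
apply: lt_rep1 => r; by rewrite h.
Qed.

Lemma rep_le {x y} : rep x y -> forall q : rat, (x <= ratr q) = (y <= ratr q).
Proof. by move=> h q; rewrite !leNgt h. Qed.

Lemma rep_ge {x y} : rep x y -> forall q : rat, (ratr q <= x) = (ratr q <= y).
Proof. by move=> h q; rewrite !leNgt (rep_gt h). Qed.

Lemma rep_eq {x y} : rep x y -> forall q : rat, (x == ratr q) = (y == ratr q).
Proof. by move=> h q; rewrite !eq_le (rep_le h) (rep_ge h). Qed.

Lemma rep_uniq x y y' : rep x y -> rep x y' -> y = y'.
Proof.
move=> h h'; apply/eqP; rewrite eq_le !leNgt; apply/andP; split; apply/negP.
  move=> /rat_dense [r /andP[a b]].
  have e := h r; rewrite b h' in e.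
  by move: a; rewrite ltNge (ltW e).
move=> /rat_dense [r /andP[a b]].
have e := h' r; rewrite b h in e.
by move: a; rewrite ltNge (ltW e).
Qed.




Lemma rep_add {x y x' y'} : rep x y -> rep x' y' -> rep (x + x') (y + y').
Proof.
move=> h h' q; apply/idP/idP => /add_char [r /andP[a b]]; apply/add_char; exists r.
  by rewrite -h -h' a b.
by rewrite h h' a b.
Qed.

Lemma rep_opp {x y} : rep x y -> rep (- x) (- y).
Proof. by move=> h q; rewrite !opp_char (rep_gt h). Qed.

Lemma rep_scale {x y} c : 0 < c -> rep x y -> rep (ratr c * x) (ratr c * y).
Proof. by move=> c0 h q; rewrite !scale_char // h. Qed.

Lemma rep_sqr {x y} : rep x y -> rep (x ^+ 2) (y ^+ 2).
Proof.
move=> h q; apply/idP/idP => /sqr_char [q0|[r /and3P[r0 qr H]]]; apply/sqr_char;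
  (try by left); right; exists r; apply/and3P; split => //.
  by rewrite -h -(rep_gt h).
by rewrite h (rep_gt h).
Qed.

Lemma quarter_id (F : archiRcfType) (x x' : F) :
  x * x' = ratr ((4%:R)^-1 : rat) * ((x + x') ^+ 2 - (x - x') ^+ 2).
Proof. rewrite fmorphV /= ratr_nat. field; by []. Qed.

Lemma rep_mul {x y x' y'} : rep x y -> rep x' y' -> rep (x * x') (y * y').
Proof.
move=> h h'; rewrite quarter_id [y * y']quarter_id.
apply: rep_scale; first by rewrite invr_gt0 ltr0n.
apply: rep_add; first exact: rep_sqr (rep_add h h').
exact: rep_opp (rep_sqr (rep_add h (rep_opp h'))).
Qed.

Lemma rep_inv {x y} : rep x y -> rep (x^-1) (y^-1).
Proof.
have pos : forall x y, rep x y -> 0 < x -> rep x^-1 y^-1.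
  move=> a b h a0; have b0 : 0 < b by move: (h 0); rewrite !rmorph0 a0 => <-.
  move=> q; apply/idP/idP.
    move/(inv_pos_char _ _ _ a0) => H; apply/(inv_pos_char _ _ _ b0).
    by case: H => [H|[H1 H2]]; [left|right; split => //; rewrite -(rep_gt h)].
  move/(inv_pos_char _ _ _ b0) => H; apply/(inv_pos_char _ _ _ a0).
  by case: H => [H|[H1 H2]]; [left|right; split => //; rewrite (rep_gt h)].
move=> h; case: (ltrgt0P x) => x0.
- exact: pos.
- have := pos _ _ (rep_opp h); rewrite oppr_gt0 => /(_ x0).
  by rewrite !invrN => /rep_opp; rewrite !opprK.
- have := rep_eq h 0; rewrite !rmorph0 x0 eqxx => /esym/eqP ->.
  by rewrite !invr0 => q; rewrite !ltrq0.
Qed.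

Lemma rep_sqrt {x y} : rep x y -> rep (Num.sqrt x) (Num.sqrt y).
Proof.
move=> h q; apply/idP/idP => /sqrt_char [q0|[q0 H]]; apply/sqrt_char;
  (try by left); right; split => //.
  by rewrite -h.
by rewrite h.
Qed.
End Rep.
Arguments rep {F1 F2}.
Arguments rep_uniq {F1 F2 x y y'}.
Arguments rep_ratr {F1 F2}.
Arguments rep_add {F1 F2 x y x' y'}.
Arguments rep_opp {F1 F2 x y}.
Arguments rep_mul {F1 F2 x y x' y'}.
Arguments rep_inv {F1 F2 x y}.
Arguments rep_sqrt {F1 F2 x y}.
Arguments rep_sqr {F1 F2 x y}.

Definition TR (y : algR) := forall u : {rmorphism algC -> algC}, u (algRval y) \is Num.real.

Lemma realC_ratr (c : rat) : (ratr c : algC) \is Num.real.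
Proof. by rewrite realE ler0q lerq0 le_total. Qed.

Lemma TR_ratr c : TR (ratr c).
Proof. by move=> u; rewrite !fmorph_rat realC_ratr. Qed.

Lemma TR_add a b : TR a -> TR b -> TR (a + b).
Proof. by move=> ha hb u; rewrite !rmorphD realD. Qed.
Lemma TR_opp a : TR a -> TR (- a).
Proof. by move=> ha u; rewrite !rmorphN realN. Qed.
Lemma TR_mul a b : TR a -> TR b -> TR (a * b).
Proof. by move=> ha hb u; rewrite !rmorphM realM. Qed.
Lemma TR_inv a : TR a -> TR (a^-1).
Proof. by move=> ha u; rewrite !fmorphV realV. Qed.

Lemma real_of_sqr (z w : algC) : z ^+ 2 = w -> 0 <= w -> z \is Num.real.
Proof.
move=> e w0; have : z ^+ 2 == sqrtC w ^+ 2 by rewrite sqrtCK e.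
rewrite eqf_sqr => /orP[] /eqP ->; last rewrite realN; apply: ger0_real; by rewrite sqrtC_ge0.
Qed.

Lemma TR_sqrt_ss a b : TR a -> TR b -> TR (Num.sqrt (a ^+ 2 + b ^+ 2)).
Proof.
move=> ha hb u.
have e : Num.sqrt (a ^+ 2 + b ^+ 2) ^+ 2 = a ^+ 2 + b ^+ 2.
  by rewrite sqr_sqrtr // addr_ge0 ?sqr_ge0.
apply: (@real_of_sqr _ (u (algRval a) ^+ 2 + u (algRval b) ^+ 2)).
  by rewrite -[LHS]rmorphXn -[algRval _ ^+ 2]rmorphXn e !rmorphD !rmorphXn.
by rewrite addr_ge0 // real_exprn_even_ge0.
Qed.

Lemma exists_u : exists u : {rmorphism algC -> algC}, forall w : algC, w ^+ 2 = 2 -> u w = - w.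
Proof.
have [z pz] := C_prim_root_exists (n:=8) isT.
have [u hu] := Qn_aut_exists (k:=3) (n:=8) isT.
have e8 : z ^+ 8 = 1 := prim_expr_order pz.
have e4 : z ^+ 4 = -1.
  have : (z ^+ 4) ^+ 2 == 1 by rewrite -exprM e8.
  rewrite sqrf_eq1 => /orP[|/eqP //].
  by rewrite -(prim_order_dvd pz).
set v := z - z ^+ 3.
have ev : v ^+ 2 = 2.
  have -> : v ^+ 2 = z ^+ 2 - 2 * z ^+ 4 + z ^+ 4 * z ^+ 2 by rewrite /v; ring.
  rewrite e4; ring.
have uv : u v = - v.
  rewrite /v rmorphB rmorphXn /= hu //.
  have -> : z ^+ 3 - (z ^+ 3) ^+ 3 = z ^+ 3 - z ^+ 8 * z by ring.
  rewrite e8; ring.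
exists u => w ew.
have : w ^+ 2 == v ^+ 2 by rewrite ew ev.
rewrite eqf_sqr => /orP[] /eqP ->; first by [].
by rewrite rmorphN uv opprK.
Qed.

Definition K (x : R) := exists y : algR, rep x y /\ TR y.

Lemma K_ratr c : K (ratr c).
Proof. exists (ratr c); split; [exact: rep_ratr | exact: TR_ratr]. Qed.
Lemma K_add a b : K a -> K b -> K (a + b).
Proof. by move=> [y [h t]] [y' [h' t']]; exists (y + y'); split; [exact: rep_add|exact: TR_add]. Qed.
Lemma K_opp a : K a -> K (- a).
Proof. by move=> [y [h t]]; exists (- y); split; [exact: rep_opp|exact: TR_opp]. Qed.
Lemma K_mul a b : K a -> K b -> K (a * b).
Proof. by move=> [y [h t]] [y' [h' t']]; exists (y * y'); split; [exact: rep_mul|exact: TR_mul]. Qed.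
Lemma K_inv a : K a -> K (a^-1).
Proof. by move=> [y [h t]]; exists (y^-1); split; [exact: rep_inv|exact: TR_inv]. Qed.
Lemma K_sqrt_ss a b : K a -> K b -> K (Num.sqrt (a ^+ 2 + b ^+ 2)).
Proof.
move=> [y [h t]] [y' [h' t']]; exists (Num.sqrt (y ^+ 2 + y' ^+ 2)); split.
  exact: (@rep_sqrt R algR _ _ (rep_add (rep_sqr h) (rep_sqr h'))).
exact (TR_sqrt_ss _ _ t t').
Qed.

Lemma K_not : ~ K (Num.sqrt (1 + Num.sqrt (ratr 2%:R))).
Proof.
move=> [y [h t]].
set s2 : algR := Num.sqrt (ratr 2%:R).
have hr : rep (Num.sqrt (1 + Num.sqrt (ratr 2%:R)) : R) (Num.sqrt (1 + s2)).
  apply: rep_sqrt; apply: rep_add; last by apply: rep_sqrt; apply: rep_ratr.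
  rewrite -(rmorph1 (ratr : rat -> R)) -(rmorph1 (ratr : rat -> algR)); exact: rep_ratr.
have ey := rep_uniq h hr; subst y.
have s0 : 0 <= s2 by exact: sqrtr_ge0.
have es : s2 ^+ 2 = 2%:R by rewrite sqr_sqrtr ?ratr_nat // ler0q.
have ey : Num.sqrt (1 + s2) ^+ 2 = 1 + s2 by rewrite sqr_sqrtr // addr_ge0.
have [u hu] := exists_u.
have us : u (algRval s2) = - algRval s2.
  by apply: hu; rewrite -rmorphXn es rmorph_nat.
have := t u; move/real_exprn_even_ge0 => /(_ 2%N isT).
rewrite -rmorphXn -rmorphXn ey !raddfD /= !rmorph1 us => H.
have : s2 <= 1 by rewrite -subr_ge0; exact: H.
move=> s1; nra.
Qed.

Close Scope ring_scope.
Open Scope R_scope.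
Lemma KR0 : K 0. Proof. have := K_ratr 0%Q; rewrite rmorph0 => h; exact h. Qed.
Lemma KR1 : K 1. Proof. have := K_ratr 1%Q; rewrite rmorph1 => h; exact h. Qed.
Lemma KRplus a b : K a -> K b -> K (Rplus a b). Proof. exact: K_add. Qed.
Lemma KRopp a : K a -> K (Ropp a). Proof. exact: K_opp. Qed.
Lemma KRmult a b : K a -> K b -> K (Rmult a b). Proof. exact: K_mul. Qed.
Lemma KRinv a : K a -> K (Rinv a). Proof. exact: K_inv. Qed.
Lemma KRsqrt a b : K a -> K b -> K (sqrt (Rplus (Rmult a a) (Rmult b b))).
Proof. move=> ha hb; rewrite RsqrtE. have := K_sqrt_ss _ _ ha hb. by rewrite !expr2. Qed.
Lemma KRnot : ~ K (sqrt (1 + sqrt 2)).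
Proof.
have -> : 2 = ratr (2%:R)%R by rewrite ratr_nat.
by rewrite !RsqrtE; apply: K_not.
Qed.

Close Scope ring_scope.
Open Scope R_scope.

Theorem mainTheorem9 :
  F0 (sqrt (2 + sqrt 2)) /\ F0 1 /\
  sqrt ((sqrt (2 + sqrt 2)) ^ 2 - 1 ^ 2) = sqrt (1 + sqrt 2) /\
  ~ F0 (sqrt (1 + sqrt 2)) /\
  ~ (forall h a : R, 0 < a -> a < h -> F0 h -> F0 a -> F0 (sqrt (h ^ 2 - a ^ 2))).
Proof.
  exact (final_generic K KR0 KR1 KRplus KRopp KRmult KRinv KRsqrt KRnot).
Qed.
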